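(* The clone $\mathscr{C}_{I_{\bar d=0}}$ is precomplete, i.e., it is a coatom of the lattice of all clones on $\mathbb{N}$: $\mathscr{C}_{I_{\bar d=0}}\ne\mathscr{O}$, and the only clone properly containing $\mathscr{C}_{I_{\bar d=0}}$ is $\mathscr{O}$.
   Context: $\mathbb{N}=\{0,1,2,\dots\}$, $\mathscr{O}$ is the set of all finitary functions $\mathbb{N}^k\to\mathbb{N}$, $k\ge1$. A clone is a subset of $\mathscr{O}$ containing all projections and closed under composition. For $A\subseteq\mathbb{N}$, $\bar d(A)=\limsup_{n\to\infty}\frac{|A\cap[0,n)|}{n}$. $\mathscr{C}_{I_{\bar d=0}}$ is the set of all $k$-ary $f\in\mathscr{O}$ such that $\bar d(f[A^k])=0$ for every $A\subseteq\mathbb{N}$ with $\bar d(A)=0$. *)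

(* Defs.v *)
From Stdlib Require Import Reals Arith Classical ClassicalDescription Fin.
From Coquelicot Require Import Coquelicot.
Open Scope R_scope.

Fixpoint cnt (A : nat -> Prop) (n : nat) : nat :=
  match n with
  | O => O
  | S n' => (cnt A n' + (if excluded_middle_informative (A n') then 1 else 0))%nat
  end.

Definition upper_density (A : nat -> Prop) : Rbar :=
  LimSup_seq (fun n => INR (cnt A n) / INR n).

(* A finitary operation on N of arity k+1 >= 1 (arguments indexed by Fin.t (S k)). *)
Definition op : Type := {k : nat & ((Fin.t (S k) -> nat) -> nat)}.

Definition proj (m : nat) (i : Fin.t (S m)) : op :=
  existT _ m (fun x => x i).

Definition comp (k m : nat) (f : (Fin.t (S k) -> nat) -> nat)
  (g : Fin.t (S k) -> ((Fin.t (S m) -> nat) -> nat)) : op :=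
  existT _ m (fun x => f (fun j => g j x)).

Definition is_clone (C : op -> Prop) : Prop :=
  (forall (m : nat) (i : Fin.t (S m)), C (proj m i)) /\
  (forall (k m : nat) (f : (Fin.t (S k) -> nat) -> nat)
          (g : Fin.t (S k) -> ((Fin.t (S m) -> nat) -> nat)),
      C (existT _ k f) -> (forall j, C (existT _ m (g j))) -> C (comp k m f g)).

Definition image_pow (k : nat) (f : (Fin.t (S k) -> nat) -> nat) (A : nat -> Prop)
  : nat -> Prop :=
  fun y => exists x : Fin.t (S k) -> nat, (forall j, A (x j)) /\ f x = y.

Definition C_dbar0 (o : op) : Prop :=
  forall A : nat -> Prop, upper_density A = Finite 0 ->
    upper_density (image_pow (projT1 o) (projT2 o) A) = Finite 0.

(* Main.v *)
Require Import Defs.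
From Stdlib Require Import Reals Lra Lia Arith List Classical ClassicalDescription FunctionalExtensionality.
From Stdlib Require ClassicalEpsilon.
From Coquelicot Require Import Coquelicot.

Lemma cnt_S P n : cnt P (S n) = (cnt P n + (if excluded_middle_informative (P n) then 1 else 0))%nat.
Proof. reflexivity. Qed.

Definition lst (P : nat -> Prop) n :=
  filter (fun x => if excluded_middle_informative (P x) then true else false) (seq 0 n).

Lemma lst_len P n : length (lst P n) = cnt P n.
Proof.
  induction n; [reflexivity|].
  unfold lst in *. rewrite seq_S, filter_app, length_app, IHn, cnt_S. simpl.
  destruct (excluded_middle_informative (P n)); simpl; lia.
Qed.

Lemma lst_in P n x : In x (lst P n) <-> (x < n /\ P x)%nat.
Proof.
  unfold lst. rewrite filter_In, in_seq.
  destruct (excluded_middle_informative (P x)); split; intros H.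
  - split; [lia|tauto].
  - split; [lia|reflexivity].
  - destruct H; discriminate.
  - destruct H; contradiction.
Qed.

Lemma cnt_le_map (P Q : nat -> Prop) (g : nat -> nat) m M :
  (forall y, (y < m)%nat -> P y -> exists x, (x < M)%nat /\ Q x /\ g x = y) ->
  (cnt P m <= cnt Q M)%nat.
Proof.
  intros H. rewrite <- !lst_len.
  rewrite <- (length_map g (lst Q M)).
  apply NoDup_incl_length.
  - unfold lst. apply NoDup_filter, seq_NoDup.
  - intros y Hy. apply lst_in in Hy. destruct Hy as [Hy1 Hy2].
    destruct (H y Hy1 Hy2) as [x [Hx1 [Hx2 Hx3]]].
    subst. apply in_map. apply lst_in. auto.
Qed.

Lemma cnt_mono (P Q : nat -> Prop) m M :
  (m <= M)%nat -> (forall y, (y < m)%nat -> P y -> Q y) -> (cnt P m <= cnt Q M)%nat.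
Proof.
  intros H1 H2. apply (cnt_le_map P Q (fun x => x)). intros y Hy Py.
  exists y. repeat split; auto; lia.
Qed.

Lemma cnt_true n : cnt (fun _ => True) n = n.
Proof.
  induction n; [reflexivity|]. rewrite cnt_S, IHn.
  destruct (excluded_middle_informative True); [lia|tauto].
Qed.

Lemma cnt_le_n P n : (cnt P n <= n)%nat.
Proof. rewrite <- (cnt_true n) at 2. apply cnt_mono; auto. Qed.

Lemma cnt_lt_bound P p n : (cnt (fun x => x < p /\ P x)%nat n <= p)%nat.
Proof.
  transitivity (cnt (fun _ => True) p); [|rewrite cnt_true; lia].
  apply (cnt_le_map _ _ (fun x => x)). intros y Hy [Hp _]. exists y. split; [exact Hp| split; [exact I | reflexivity]].
Qed.

Lemma cnt_or (P Q : nat -> Prop) n : (cnt (fun x => P x \/ Q x) n <= cnt P n + cnt Q n)%nat.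
Proof.
  induction n; [simpl; lia|]. rewrite !cnt_S.
  destruct (excluded_middle_informative (P n \/ Q n)) as [[h|h]|h];
  destruct (excluded_middle_informative (P n)); destruct (excluded_middle_informative (Q n));
  try tauto; lia.
Qed.

Lemma cnt_shift P n m : cnt P (n + m) = (cnt P n + cnt (fun v => P (n + v)) m)%nat.
Proof.
  induction m. { rewrite Nat.add_0_r. simpl. lia. }
  rewrite Nat.add_succ_r, !cnt_S, IHm. lia.
Qed.

Lemma cnt_ext P Q n : (forall x, (x < n)%nat -> (P x <-> Q x)) -> cnt P n = cnt Q n.
Proof.
  intros H. apply Nat.le_antisymm; apply cnt_mono; auto; intros y Hy; apply H; auto.
Qed.

Lemma cnt_periodic (R : nat -> Prop) s d : (0 < s)%nat ->
  cnt (fun v => R (v mod s)) (d * s) = (d * cnt R s)%nat.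
Proof.
  intros Hs. induction d. reflexivity.
  replace (S d * s)%nat with (d * s + s)%nat by lia.
  rewrite cnt_shift, IHd.
  rewrite (cnt_ext (fun v => R ((d*s+v) mod s)) R s). lia.
  intros x Hx. replace ((d * s + x) mod s)%nat with x. tauto.
  rewrite Nat.add_comm, Nat.Div0.mod_add by lia. rewrite Nat.mod_small; auto.
Qed.

Definition dens0 (P : nat -> Prop) : Prop :=
  forall K, exists N, forall n, (N <= n)%nat -> (K * cnt P n <= n)%nat.

Lemma dens0_mono (P Q : nat -> Prop) : (forall x, P x -> Q x) -> dens0 Q -> dens0 P.
Proof.
  intros H HQ K. destruct (HQ K) as [N HN]. exists N. intros n Hn.
  specialize (HN n Hn). assert (cnt P n <= cnt Q n)%nat by (apply cnt_mono; auto).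
  nia.
Qed.

Lemma dens0_or (P Q : nat -> Prop) : dens0 P -> dens0 Q -> dens0 (fun x => P x \/ Q x).
Proof.
  intros HP HQ K. destruct (HP (2*K)%nat) as [N1 H1]. destruct (HQ (2*K)%nat) as [N2 H2].
  exists (N1 + N2)%nat. intros n Hn. specialize (H1 n ltac:(lia)). specialize (H2 n ltac:(lia)).
  pose proof (cnt_or P Q n). nia.
Qed.

Lemma dens0_exFin n (P : Fin.t n -> nat -> Prop) :
  (forall j, dens0 (P j)) -> dens0 (fun v => exists j, P j v).
Proof.
  induction n; intros H.
  - apply (dens0_mono _ (fun _ => False)). intros x [j _]. inversion j.
    intros K. exists 0%nat. intros m _. replace (cnt (fun _ => False) m) with 0%nat. lia.
    symmetry. induction m; [reflexivity|]. rewrite cnt_S, <- IHm.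
    destruct (excluded_middle_informative False); [tauto|lia].
  - apply (dens0_mono _ (fun v => P Fin.F1 v \/ exists j, P (Fin.FS j) v)).
    intros x [j Hj]. revert Hj. apply (Fin.caseS' j); eauto.
    apply dens0_or. auto. apply (IHn (fun j => P (Fin.FS j))). intros; auto.
Qed.

Lemma ud0_iff P : upper_density P = Finite 0 <-> dens0 P.
Proof.
  unfold upper_density. destruct (ex_LimSup_seq (fun n => INR (cnt P n) / INR n)) as [l Hl].
  rewrite (is_LimSup_seq_unique _ _ Hl). split.
  - intros ->. intros K. destruct K as [|K]. { exists 0%nat. intros; lia. }
    destruct (proj2 (Hl (mkposreal (/ INR (S K)) ltac:(apply Rinv_0_lt_compat, lt_0_INR; lia)))) as [N HN].
    exists (S N). intros n Hn. specialize (HN n ltac:(lia)). change (INR (cnt P n) / INR n < 0 + / INR (S K)) in HN.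
    assert (Hn0 : 0 < INR n) by (apply lt_0_INR; lia).
    assert (HK0 : 0 < INR (S K)) by (apply lt_0_INR; lia).
    apply INR_le. rewrite mult_INR.
    assert (HN' : INR (cnt P n) < INR n / INR (S K)).
    { apply (Rmult_lt_reg_r (/ INR n)). apply Rinv_0_lt_compat; lra.
      unfold Rdiv in *. replace (INR n * / INR (S K) * / INR n) with (/ INR (S K)) by (field; lra). lra. }
    apply (Rmult_lt_compat_l (INR (S K))) in HN'; [|lra].
    replace (INR (S K) * (INR n / INR (S K))) with (INR n) in HN' by (field; lra). lra.
  - intros H.
    assert (H0 : is_LimSup_seq (fun n => INR (cnt P n) / INR n) (Finite 0)).
    { intros eps. split.
      - intros N. exists (S N). split; [lia|].
        assert (0 < INR (S N)) by (apply lt_0_INR; lia).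
        assert (0 <= INR (cnt P (S N)) / INR (S N)).
        { unfold Rdiv. apply Rmult_le_pos; [apply pos_INR|left; apply Rinv_0_lt_compat; lra]. }
        destruct eps as [e he]. change (0 - e < INR (cnt P (S N)) / INR (S N)). lra.
      - destruct eps as [e he]. change (exists N, forall n, (N <= n)%nat -> INR (cnt P n) / INR n < 0 + e).
        destruct (INR_unbounded (/ e)) as [K HK].
        destruct (H K) as [N HN]. exists (S N). intros n Hn.
        specialize (HN n ltac:(lia)).
        assert (Hn0 : 0 < INR n) by (apply lt_0_INR; lia).
        assert (HKp : 0 < INR K) by (assert (0 < / e) by (apply Rinv_0_lt_compat; lra); lra).
        apply le_INR in HN. rewrite mult_INR in HN.
        assert (INR (cnt P n) / INR n <= / INR K).
        { apply (Rmult_le_reg_l (INR K)); auto. apply (Rmult_le_reg_r (INR n)); auto.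
          unfold Rdiv. replace (INR K * (INR (cnt P n) * / INR n) * INR n) with (INR K * INR (cnt P n)) by (field; lra).
          replace (INR K * / INR K * INR n) with (INR n) by (field; lra). lra. }
        assert (/ INR K < e).
        { replace e with (/ / e) by (field; lra). apply Rinv_lt_contravar; auto.
          apply Rmult_lt_0_compat; auto. apply Rinv_0_lt_compat; lra. }
        lra. }
    rewrite <- (is_LimSup_seq_unique _ _ Hl). apply is_LimSup_seq_unique. exact H0.
Qed.
Local Open Scope nat_scope.
Lemma C_of_image m F (Z : nat -> Prop) :
  (forall x, Z (F x)) -> dens0 Z -> C_dbar0 (existT _ m F).
Proof.
  intros HF HZ A _. simpl. apply ud0_iff. apply (dens0_mono _ Z); auto.
  intros y [x [_ Hx]]. subst; auto.
Qed.

Lemma C_iff k f : C_dbar0 (existT _ k f) <->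
  (forall A, dens0 A -> dens0 (image_pow k f A)).
Proof.
  unfold C_dbar0; simpl. split; intros H A HA.
  - apply ud0_iff, H, ud0_iff, HA.
  - apply ud0_iff, H, ud0_iff, HA.
Qed.

Lemma clone_C : is_clone C_dbar0.
Proof.
  split.
  - intros m i. apply C_iff. intros A HA. apply (dens0_mono _ A); auto.
    intros y [x [Hx Hy]]. subst; auto.
  - intros k m f g Hf Hg. unfold comp. apply C_iff. intros A HA.
    rewrite C_iff in Hf.
    pose (B := fun v => exists j, image_pow m (g j) A v).
    assert (HB : dens0 B).
    { apply dens0_exFin. intros j. specialize (Hg j). rewrite C_iff in Hg. auto. }
    apply (dens0_mono _ (image_pow k f B)); [|auto].
    intros y [x [Hx Hy]]. exists (fun j => g j x). split; auto.
    intros j. exists j. exists x. auto.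
Qed.

Definition pow2 (b : nat) : Prop := exists j, b = 2 ^ j.

Lemma sq_le_pow L : ((L+1)*(L+1) <= 4 * 2^L)%nat.
Proof.
  induction L. simpl; lia.
  rewrite Nat.pow_succ_r'. destruct L as [|[|L]]. simpl; lia. simpl; lia. nia.
Qed.

Lemma dens0_pow2 : dens0 pow2.
Proof.
  intros K. exists (2 ^ (4*K))%nat. intros n Hn.
  assert (Hn0 : (0 < n)%nat) by (pose proof (Nat.pow_nonzero 2 (4*K)); lia).
  set (L := Nat.log2 n).
  assert (HL : (cnt pow2 n <= S L)%nat).
  { rewrite <- (cnt_true (S L)). apply (cnt_le_map _ _ (fun x => 2 ^ x)).
    intros y Hy [j ->]. exists j. split; [|split; auto].
    assert (j <= L)%nat; [|lia]. apply Nat.log2_le_pow2; lia. }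
  assert (HL2 : (4*K <= L)%nat).
  { unfold L. rewrite <- (Nat.log2_pow2 (4*K)) by lia. apply Nat.log2_le_mono; auto. }
  pose proof (sq_le_pow L). pose proof (Nat.log2_spec n Hn0). fold L in H0.
  nia.
Qed.

Lemma not_C_log2 : exists o : op, ~ C_dbar0 o.
Proof.
  exists (existT _ 0%nat (fun x => Nat.log2 (x Fin.F1))). rewrite C_iff. intros H.
  specialize (H pow2 dens0_pow2 2%nat). destruct H as [N HN]. specialize (HN (S N) ltac:(lia)).
  rewrite (cnt_ext _ (fun _ => True)) in HN. rewrite cnt_true in HN. lia.
  intros y _. split; auto. intros _. exists (fun _ => 2 ^ y). split.
  intros j. exists y; auto. apply Nat.log2_pow2; lia.
Qed.
Definition prev (s : nat -> nat) (j : nat) : nat :=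
  match j with 0 => 0 | S j' => s j' end.

Definition cc (s : nat -> nat) (a j k : nat) : nat :=
  if andb (andb (Nat.leb (prev s j) a) (Nat.ltb a (s j))) (Nat.ltb (a + s j * k) (s (S j))) then a + s j * k else a.

Lemma s_ge (s : nat -> nat) : 1 <= s 0 -> (forall j, S j * s j < s (S j)) -> forall j, j < s j.
Proof. intros H0 Hs j. induction j. lia. specialize (Hs j). nia. Qed.

Lemma s_mono (s : nat -> nat) : (forall j, s j < s (S j)) -> forall i j, i <= j -> s i <= s j.
Proof.
  intros Hs i j Hij. induction Hij. lia. specialize (Hs m). lia.
Qed.

Lemma find_level (s : nat -> nat) : (forall j, s j < s (S j)) -> (forall j, j < s j) ->
  forall m t, s m <= t -> exists i, m <= i /\ s i <= t < s (S i).
Proof.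
  intros Hs Hge m t Ht.
  assert (forall d, t < s (m + d) -> exists i, m <= i /\ s i <= t < s (S i)).
  { induction d; intros Hd. rewrite Nat.add_0_r in Hd. lia.
    destruct (le_lt_dec (s (m + d)) t).
    - exists (m + d). split; [lia|]. rewrite Nat.add_succ_r in Hd. lia.
    - apply IHd; auto. }
  apply (H t). pose proof (Hge (m + t)). pose proof (s_mono s Hs t (m+t) ltac:(lia)).
  pose proof (Hge t). lia.
Qed.

Lemma cnt_per_bound (X : nat -> Prop) s t : 0 < s ->
  cnt (fun v => X (v mod s)) t <= (t / s + 1) * cnt X s.
Proof.
  intros Hs. rewrite <- cnt_periodic by auto. apply cnt_mono; auto.
  pose proof (Nat.div_mod_eq t s). pose proof (Nat.mod_upper_bound t s ltac:(lia)). nia.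
Qed.

Lemma mod_cc (s : nat -> nat) a j k : a < s j -> (a + s j * k) mod s j = a.
Proof.
  intros H. rewrite Nat.mul_comm, Nat.Div0.mod_add. apply Nat.mod_small; auto.
Qed.

Lemma dens0_cc (s : nat -> nat) (X : nat -> Prop) :
  1 <= s 0 -> (forall j, S j * s j < s (S j)) -> dens0 X ->
  dens0 (fun v => exists a j k, X a /\ v = cc s a j k).
Proof.
  intros H0 Hs HX K.
  assert (Hge := s_ge s H0 Hs).
  assert (Hs' : forall j, s j < s (S j)) by (intros j; specialize (Hs j); nia).
  assert (Hmono := s_mono s Hs').
  destruct (HX (8*K)) as [N1 H1].
  exists (s (S (N1 + 4*K))). intros t Ht.
  destruct (find_level s Hs' Hge _ _ Ht) as [i' [Hi' [Ht1 Ht2]]].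
  destruct i' as [|i]; [lia|].
  assert (Hi : N1 + 4*K <= i) by lia.
  pose proof (Hge i).
  assert (Hsi : 0 < s i) by lia.
  assert (HsSi : 0 < s (S i)) by (pose proof (Hs' i); lia).
  set (V := fun v => exists a j k, X a /\ v = cc s a j k).
  assert (Hpt : forall v, v < t -> V v ->
     (v < s i /\ True) \/ (X v \/ (X (v mod s i) \/ X (v mod s (S i))))).
  { intros v Hv [a [j [k [Xa ->]]]]. unfold cc in *.
    destruct (Nat.leb (prev s j) a) eqn:E1; destruct (Nat.ltb a (s j)) eqn:E2;
      destruct (Nat.ltb (a + s j * k) (s (S j))) eqn:E3; simpl in *; auto.
    apply Nat.ltb_lt in E2, E3.
    destruct k as [|k]. { rewrite Nat.mul_0_r, Nat.add_0_r. auto. }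
    assert (HC : S j <= i \/ j = i \/ j = S i \/ S (S i) <= j) by lia.
    destruct HC as [HC|[HC|[HC|HC]]].
    - left. split; auto. pose proof (Hmono _ _ HC). lia.
    - subst j. right; right; left. rewrite mod_cc; auto.
    - subst j. right; right; right. rewrite mod_cc; auto.
    - pose proof (Hmono _ _ HC). nia. }
  assert (Hc : cnt V t <= cnt (fun v => v < s i /\ True) t + (cnt X t +
     (cnt (fun v => X (v mod s i)) t + cnt (fun v => X (v mod s (S i))) t))).
  { eapply Nat.le_trans. apply cnt_mono with (Q := fun v => (v < s i /\ True) \/
       (X v \/ (X (v mod s i) \/ X (v mod s (S i))))); auto.
    eapply Nat.le_trans. apply cnt_or. apply Nat.add_le_mono_l.
    eapply Nat.le_trans. apply cnt_or. apply Nat.add_le_mono_l.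
    apply cnt_or. }
  pose proof (cnt_lt_bound (fun _ => True) (s i) t) as A1.
  pose proof (cnt_per_bound X (s i) t Hsi) as A3.
  pose proof (cnt_per_bound X (s (S i)) t HsSi) as A4.
  pose proof (H1 t ltac:(pose proof (Hge (S (N1 + 4*K))); lia)) as B2.
  pose proof (H1 (s i) ltac:(lia)) as B3.
  pose proof (H1 (s (S i)) ltac:(pose proof (Hge (S i)); lia)) as B4.
  pose proof (Hs i) as Hsi2.
  set (d1 := t / s i) in *. set (d2 := t / s (S i)) in *.
  assert (D1 : s i * d1 <= t) by apply Nat.Div0.mul_div_le.
  assert (D2 : s (S i) * d2 <= t) by apply Nat.Div0.mul_div_le.
  set (c1 := cnt X (s i)) in *. set (c2 := cnt X (s (S i))) in *.
  assert (E1 : 4 * (K * s i) <= t) by nia.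
  assert (E3 : 4 * (K * ((d1 + 1) * c1)) <= t) by nia.
  assert (E4 : 4 * (K * ((d2 + 1) * c2)) <= t) by nia.
  nia.
Qed.
Lemma dens0_rank (T V : nat -> Prop) L x0 :
  (forall x, x0 <= x -> x <= L * cnt T x) -> dens0 V ->
  dens0 (fun y => exists x, V x /\ y = cnt T x).
Proof.
  intros HT HV K. destruct (HV (2*K*(L+1))) as [N1 H1].
  exists (N1 + x0 + 1). intros m Hm.
  assert (Hc : cnt (fun y => exists x, V x /\ y = cnt T x) m <= cnt V (x0 + (L+1)*m)).
  { apply (cnt_le_map _ _ (cnt T)). intros y Hy [x [Vx ->]].
    exists x. split; auto.
    destruct (le_lt_dec x0 x) as [h|h]; [|nia]. specialize (HT x h). nia. }
  specialize (H1 (x0 + (L+1)*m) ltac:(nia)).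
  set (cV := cnt V (x0 + (L+1)*m)) in *.
  assert (E : (2*(L+1)) * (K * cV) <= (2*(L+1)) * m) by nia.
  apply Nat.mul_le_mono_pos_l in E; [|lia]. nia.
Qed.

Lemma cnt_hit (P : nat -> Prop) n y : y < cnt P n -> exists v, P v /\ cnt P v = y.
Proof.
  induction n; intros H. simpl in H; lia.
  destruct (le_lt_dec (cnt P n) y) as [h|h].
  - rewrite cnt_S in H. destruct (excluded_middle_informative (P n)).
    exists n. split; auto; lia. lia.
  - apply IHn; auto.
Qed.

Lemma lower_T (s : nat -> nat) (Y : nat -> Prop) K :
  1 <= s 0 -> (forall j, S j * s j < s (S j)) ->
  (forall j, s j < K * cnt Y (s j)) -> (forall j, 2 * K * s j <= s (S j)) ->
  forall t, s 0 <= t -> t <= 4 * K * cnt (fun v => exists a j k, Y a /\ v = cc s a j k) t.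
Proof.
  intros H0 Hs Hgood Hs2 t Ht.
  assert (Hge := s_ge s H0 Hs).
  assert (Hs' : forall j, s j < s (S j)) by (intros j; specialize (Hs j); nia).
  destruct (find_level s Hs' Hge _ _ Ht) as [i [_ [Ht1 Ht2]]].
  assert (Hsi : 0 < s i) by (pose proof (Hge i); lia).
  set (T := fun v => exists a j k, Y a /\ v = cc s a j k).
  set (R := fun a => Y a /\ prev s i <= a).
  set (d := t / s i).
  assert (D1 : s i * d <= t) by apply Nat.Div0.mul_div_le.
  assert (D2 : t < s i * (d + 1)).
  { pose proof (Nat.div_mod_eq t (s i)). pose proof (Nat.mod_upper_bound t (s i) ltac:(lia)). unfold d. nia. }
  assert (C1 : cnt (fun v => R (v mod s i)) (d * s i) <= cnt T t).
  { apply cnt_mono. nia. intros y Hy [Ya Hp].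
    exists (y mod s i), i, (y / s i). split; auto.
    pose proof (Nat.div_mod_eq y (s i)). pose proof (Nat.mod_upper_bound y (s i) ltac:(lia)).
    unfold cc. replace (Nat.leb (prev s i) (y mod s i)) with true by (symmetry; apply Nat.leb_le; auto).
    replace (Nat.ltb (y mod s i) (s i)) with true by (symmetry; apply Nat.ltb_lt; auto).
    replace (Nat.ltb (y mod s i + s i * (y / s i)) (s (S i))) with true by (symmetry; apply Nat.ltb_lt; nia).
    simpl. lia. }
  rewrite cnt_periodic in C1 by auto.
  assert (C2 : cnt Y (s i) <= cnt R (s i) + prev s i).
  { eapply Nat.le_trans. apply cnt_mono with (Q := fun a => R a \/ (a < prev s i /\ True)); auto.
    intros y _ Yy. destruct (le_lt_dec (prev s i) y); [left; split; auto|right; auto].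
    eapply Nat.le_trans. apply cnt_or. pose proof (cnt_lt_bound (fun _ => True) (prev s i) (s i)). lia. }
  assert (C3 : 2 * K * prev s i <= s i).
  { destruct i; simpl. lia. apply Hs2. }
  specialize (Hgood i).
  assert (d >= 1) by nia.
  set (cR := cnt R (s i)) in *. set (cT := cnt T t) in *. set (p := prev s i) in *.
  assert (F1 : s i < 2 * K * cR) by nia.
  assert (F2 : t < 2 * d * s i) by nia.
  assert (F3 : 2 * d * s i <= 4 * K * (d * cR)) by nia.
  nia.
Qed.
Definition Wf (s : nat -> nat) (T : nat -> Prop) (v : Fin.t 3 -> nat) : nat :=
  cnt T (cc s (v Fin.F1) (Nat.log2 (v (Fin.FS Fin.F1))) (Nat.log2 (v (Fin.FS (Fin.FS Fin.F1))))).

Lemma part3 : forall D : op -> Prop, is_clone D ->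
     (forall o, C_dbar0 o -> D o) ->
     (exists o, D o /\ ~ C_dbar0 o) ->
     forall o, D o.
Proof.
  intros D [Dproj Dcomp] HCD [[k0 f0] [Df Hnf]] [m h].
  rewrite C_iff in Hnf. apply not_all_ex_not in Hnf as [A HA].
  apply imply_to_and in HA as [HA HY].
  set (Y := image_pow k0 f0 A) in *.
  apply not_all_ex_not in HY as [K HK].
  assert (Hgood : forall N, exists n, N <= n /\ n < K * cnt Y n).
  { intros N. destruct (classic (exists n, N <= n /\ n < K * cnt Y n)) as [H|H]; auto.
    exfalso. apply HK. exists N. intros n Hn.
    destruct (le_lt_dec (K * cnt Y n) n) as [h1|h1]; auto. exfalso; apply H; eauto. }
  set (pick := fun N => proj1_sig (ClassicalEpsilon.constructive_indefinite_description _ (Hgood N))).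
  assert (Hpick : forall N, N <= pick N /\ pick N < K * cnt Y (pick N)).
  { intros N. unfold pick. destruct (ClassicalEpsilon.constructive_indefinite_description _ (Hgood N)); auto. }
  set (s := fix s j := match j with 0 => pick 1 | S j' => pick (2*K*(S j')*(s j') + 1) end).
  assert (sS : forall j, s (S j) = pick (2*K*(S j)*(s j) + 1)) by reflexivity.
  assert (s0 : s 0 = pick 1) by reflexivity.
  assert (HK1 : 1 <= K).
  { destruct (Hpick 1) as [_ h1]. destruct K; lia. }
  assert (H0 : 1 <= s 0) by (rewrite s0; apply (Hpick 1)).
  assert (Hs : forall j, S j * s j < s (S j)).
  { intros j. rewrite sS. pose proof (proj1 (Hpick (2*K*(S j)*(s j) + 1))). nia. }
  assert (Hs2 : forall j, 2 * K * s j <= s (S j)).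
  { intros j. rewrite sS. pose proof (proj1 (Hpick (2*K*(S j)*(s j) + 1))). nia. }
  assert (Hg : forall j, s j < K * cnt Y (s j)).
  { intros [|j]. rewrite s0; apply Hpick. rewrite sS; apply Hpick. }
  set (T := fun v => exists a j k, Y a /\ v = cc s a j k).
  assert (Hlow := lower_T s Y K H0 Hs Hg Hs2).
  fold T in Hlow.
  assert (HW : C_dbar0 (existT _ 2 (Wf s T))).
  { apply C_iff. intros X HX.
    apply (dens0_mono _ (fun y => exists x, (fun v => exists a j k, X a /\ v = cc s a j k) x /\ y = cnt T x)).
    - intros y [x [Hx Hy]]. exists (cc s (x Fin.F1) (Nat.log2 (x (Fin.FS Fin.F1))) (Nat.log2 (x (Fin.FS (Fin.FS Fin.F1))))).
      split. eauto 6. rewrite <- Hy. reflexivity.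
    - apply (dens0_rank T _ (4*K) (s 0)); auto. apply dens0_cc; auto. }
  assert (Hsurj : forall y, exists p : nat * nat * nat,
     Y (fst (fst p)) /\ pow2 (snd (fst p)) /\ pow2 (snd p) /\
     cnt T (cc s (fst (fst p)) (Nat.log2 (snd (fst p))) (Nat.log2 (snd p))) = y).
  { intros y. pose proof (Hlow (s 0 + 4*K*(y+1)) ltac:(lia)) as Hl.
    destruct (cnt_hit T (s 0 + 4*K*(y+1)) y ltac:(nia)) as [v [[a [j [k [Ya ->]]]] Hv]].
    exists (a, 2^j, 2^k). simpl. repeat split; auto. exists j; auto. exists k; auto.
    rewrite !Nat.log2_pow2 by lia. auto. }
  set (F := fun y => proj1_sig (ClassicalEpsilon.constructive_indefinite_description _ (Hsurj y))).
  assert (HF : forall y, Y (fst (fst (F y))) /\ pow2 (snd (fst (F y))) /\ pow2 (snd (F y)) /\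
     cnt T (cc s (fst (fst (F y))) (Nat.log2 (snd (fst (F y)))) (Nat.log2 (snd (F y)))) = y).
  { intros y. unfold F. destruct (ClassicalEpsilon.constructive_indefinite_description _ (Hsurj y)); auto. }
  set (tup := fun y => proj1_sig (ClassicalEpsilon.constructive_indefinite_description _ (proj1 (HF y)))).
  assert (Htup : forall y, (forall j, A (tup y j)) /\ f0 (tup y) = fst (fst (F y))).
  { intros y. unfold tup. destruct (ClassicalEpsilon.constructive_indefinite_description _ (proj1 (HF y))); auto. }
  set (s1f := fun x => f0 (fun j => tup (h x) j)).
  set (b1f := fun x => snd (fst (F (h x)))).
  set (b2f := fun x => snd (F (h x))).
  assert (Ds1 : D (existT _ m s1f)).
  { apply (Dcomp k0 m f0 (fun j x => tup (h x) j)); auto.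
    intros j. apply HCD. apply (C_of_image _ _ A); auto. intros x. apply Htup. }
  assert (Db1 : D (existT _ m b1f)).
  { apply HCD. apply (C_of_image _ _ pow2); [|apply dens0_pow2]. intros x. apply HF. }
  assert (Db2 : D (existT _ m b2f)).
  { apply HCD. apply (C_of_image _ _ pow2); [|apply dens0_pow2]. intros x. apply HF. }
  set (g := fun (j : Fin.t 3) => match proj1_sig (Fin.to_nat j) with 0 => s1f | 1 => b1f | _ => b2f end).
  assert (Dg : forall j, D (existT _ m (g j))).
  { intros j. unfold g. destruct (proj1_sig (Fin.to_nat j)) as [|[|n]]; auto. }
  pose proof (Dcomp 2 m (Wf s T) g (HCD _ HW) Dg) as Dfin.
  unfold comp in Dfin.
  replace h with (fun x => Wf s T (fun j => g j x)); auto.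
  apply functional_extensionality. intros x. unfold Wf, g. simpl.
  unfold s1f, b1f, b2f. change (fun j : Fin.t (S k0) => tup (h x) j) with (tup (h x)). rewrite (proj2 (Htup (h x))). apply HF.
Qed.

Theorem mainTheorem7 :
  is_clone C_dbar0 /\
  (exists o : op, ~ C_dbar0 o) /\
  (forall D : op -> Prop, is_clone D ->
     (forall o, C_dbar0 o -> D o) ->
     (exists o, D o /\ ~ C_dbar0 o) ->
     forall o, D o).
Proof.
  split; [exact clone_C|]. split; [exact not_C_log2|]. exact part3.
Qed.
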